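(* If $G$ is a graph that contains no induced subgraph isomorphic to $C_5$ and no induced subgraph isomorphic to the bull, and $G$ contains an anchor, then $G$ contains a homogeneous set.
   Context: All graphs are finite and simple. The bull is the graph consisting of a triangle with two disjoint pendant edges. For disjoint $A,B\subseteq V(G)$, $A$ is complete (anticomplete) to $B$ if every vertex of $A$ is adjacent (non-adjacent) to every vertex of $B$. A set $X\subseteq V(G)$ is a homogeneous set if $1<|X|<|V(G)|$ and every vertex of $V(G)\setminus X$ is either complete or anticomplete to $X$. An anchor is a six-vertex graph consisting of a 4-vertex induced path $P$, a vertex $c$ complete to $V(P)$, and a vertex $a$ anticomplete to $V(P)$ (with $a,c$ either adjacent or not). $G$ contains an anchor if some induced subgraph of $G$ is isomorphic to an anchor. *)

(* Defs.v *)
From mathcomp Require Import all_boot.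
Set Implicit Arguments. Unset Strict Implicit. Unset Printing Implicit Defensive.

Definition simple_graph (T : finType) (e : rel T) : Prop :=
  irreflexive e /\ symmetric e.

Definition has_induced (T : finType) (e : rel T) (k : nat) (h : rel 'I_k) : Prop :=
  exists f : 'I_k -> T, injective f /\ forall i j, h i j = e (f i) (f j).

Definition edges_rel (k : nat) (E : seq (nat * nat)) : rel 'I_k :=
  fun i j => ((val i, val j) \in E) || ((val j, val i) \in E).

Definition C5 : rel 'I_5 :=
  @edges_rel 5 [:: (0,1); (1,2); (2,3); (3,4); (4,0)].

Definition bull : rel 'I_5 :=
  @edges_rel 5 [:: (0,1); (1,2); (0,2); (0,3); (1,4)].

(* anchors: induced path 0-1-2-3, vertex 4 (= c) complete to the path,
   vertex 5 (= a) anticomplete to the path; a,c nonadjacent or adjacent. *)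
Definition anchor_nonadj : rel 'I_6 :=
  @edges_rel 6 [:: (0,1); (1,2); (2,3); (4,0); (4,1); (4,2); (4,3)].
Definition anchor_adj : rel 'I_6 :=
  @edges_rel 6 [:: (0,1); (1,2); (2,3); (4,0); (4,1); (4,2); (4,3); (4,5)].

Definition contains_anchor (T : finType) (e : rel T) : Prop :=
  has_induced e anchor_nonadj \/ has_induced e anchor_adj.

Definition homogeneous (T : finType) (e : rel T) (X : {set T}) : Prop :=
  1 < #|X| < #|T| /\
  forall v, v \notin X -> (forall x, x \in X -> e v x) \/ (forall x, x \in X -> ~~ e v x).

(* Main.v *)
Require Import Defs.
From mathcomp Require Import all_boot zify.
Set Implicit Arguments. Unset Strict Implicit. Unset Printing Implicit Defensive.

Definition hb (i j : nat) : bool :=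
  match i, j with
  | 0,1 | 1,0 | 1,2 | 2,1 | 0,2 | 2,0 | 0,3 | 3,0 | 1,4 | 4,1 => true
  | _,_ => false end.
Definition hc (i j : nat) : bool :=
  match i, j with
  | 0,1 | 1,0 | 1,2 | 2,1 | 2,3 | 3,2 | 3,4 | 4,3 | 4,0 | 0,4 => true
  | _,_ => false end.

Lemma hb_bull (i j : 'I_5) : bull i j = hb i j.
Proof. by case: i j => [[|[|[|[|[|i]]]]] Hi] [[|[|[|[|[|j]]]]] Hj]. Qed.
Lemma hc_C5 (i j : 'I_5) : C5 i j = hc i j.
Proof. by case: i j => [[|[|[|[|[|i]]]]] Hi] [[|[|[|[|[|j]]]]] Hj]. Qed.

Definition mget (M : seq (seq bool)) i j := nth false (nth [::] M i) j.
Definition consistent (hp : nat -> nat -> bool) M acc x :=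
  all (fun i => hp i (size acc) == mget M (nth 0 acc i) x) (iota 0 (size acc)).
Fixpoint gen hp M n k acc : seq (seq nat) :=
  if k is k'.+1 then
    flatten [seq gen hp M n k' (rcons acc x) | x <- iota 0 n & consistent hp M acc x]
  else [:: acc].
Definition okf (hp : nat -> nat -> bool) M (f : seq nat) :=
  all (fun i => all (fun j => hp i j == mget M (nth 0 f i) (nth 0 f j)) (iota 0 5)) (iota 0 5).
Definition good5 hp M f := [&& size f == 5, all (fun x => x < size M) f & okf hp M f].
Definition checker M :=
  has (good5 hb M) (gen hb M (size M) 5 [::]) || has (good5 hc M) (gen hc M (size M) 5 [::]).
Arguments checker : simpl never.

Definition tfree (hp : nat -> nat -> bool) :=
  all (fun i => all (fun j => (all (fun k => hp i k == hp j k) (iota 0 5) && ~~ hp i j) ==> (i == j)) (iota 0 5)) (iota 0 5).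
Lemma tf_hb : tfree hb. Proof. by vm_compute. Qed.
Lemma tf_hc : tfree hc. Proof. by vm_compute. Qed.

Lemma twin_free hp i j : tfree hp -> i < 5 -> j < 5 ->
  (forall k, k < 5 -> hp i k = hp j k) -> hp i j = false -> i = j.
Proof.
move=> HE Hi Hj Hk Hij.
have Hi' : i \in iota 0 5 by rewrite mem_iota.
have Hj' : j \in iota 0 5 by rewrite mem_iota.
have := allP HE i Hi'. move=> /allP /(_ j Hj').
rewrite Hij andbT => /implyP H. apply/eqP; apply: H.
apply/allP => k; rewrite mem_iota add0n => /andP[_ /Hk ->]. by [].
Qed.

Lemma ar1 (x : nat) : 0 < x -> x <= 0 -> False. Proof. lia. Qed.
Lemma ar2 a b t : a + b = t -> 0 < b -> a < t. Proof. lia. Qed.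
Lemma ar3 s c c' t n : s + c = t -> (1 + s) + c' = t -> c <= n.+1 -> c' <= n. Proof. lia. Qed.

Section G.
Variable T : finType.
Variable e : rel T.
Hypothesis irr : irreflexive e.
Hypothesis sym : symmetric e.
Hypothesis nobull : ~ has_induced e bull.
Hypothesis noc5 : ~ has_induced e C5.

Lemma irrE x : e x x = false. Proof. exact: irr. Qed.
Lemma symE x y : e x y = e y x. Proof. exact: sym. Qed.

Definition adjm (xs : seq T) := [seq [seq e x y | y <- xs] | x <- xs].

Lemma mget_adjm (x0 : T) xs i j : i < size xs -> j < size xs ->
  mget (adjm xs) i j = e (nth x0 xs i) (nth x0 xs j).
Proof.
move=> Hi Hj. rewrite /mget /adjm (nth_map x0) // (nth_map x0) //.
Qed.

Lemma sound_gen (hp : nat -> nat -> bool) (h : rel 'I_5) (x0 : T) (xs : seq T) f :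
  (forall i j : 'I_5, h i j = hp i j) -> tfree hp ->
  good5 hp (adjm xs) f -> has_induced e h.
Proof.
move=> hE HE /and3P[/eqP sf af ok]; rewrite size_map in af.
have fi : forall i : 'I_5, nth 0 f i < size xs.
  by move=> i; apply: (allP af); apply: mem_nth; rewrite sf.
pose g (i : 'I_5) := nth x0 xs (nth 0 f i).
have rel : forall i j : 'I_5, h i j = e (g i) (g j).
  move=> i j. rewrite hE -mget_adjm ?fi //.
  have Hi' : val i \in iota 0 5 by rewrite mem_iota add0n ltn_ord.
  have Hj' : val j \in iota 0 5 by rewrite mem_iota add0n ltn_ord.
  have := allP ok i Hi'.
  by move=> /allP /(_ j Hj') /eqP.
exists g; split => // i j gij.
apply/val_inj/(twin_free HE); [exact: ltn_ord|exact: ltn_ord| |].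
- move=> k Hk. have := hE i (Ordinal Hk). have := hE j (Ordinal Hk).
  by rewrite /= !rel gij => <- <-.
- by rewrite -hE rel gij irrE.
Qed.

Lemma sound (x0 : T) (xs : seq T) : checker (adjm xs) -> False.
Proof.
rewrite /checker => /orP[/hasP [f _ ok]|/hasP [f _ ok]].
- by apply: nobull; apply: (sound_gen x0 hb_bull tf_hb ok).
- by apply: noc5; apply: (sound_gen x0 hc_C5 tf_hc ok).
Qed.

Ltac norm :=
  repeat first
  [ rewrite irrE
  | match goal with
    | H : is_true (e ?x ?y) |- context [e ?x ?y] => rewrite H
    | H : is_true (e ?x ?y) |- context [e ?y ?x] => rewrite (symE y x) H
    | H : is_true (~~ e ?x ?y) |- context [e ?x ?y] => rewrite (negbTE H)
    | H : is_true (~~ e ?x ?y) |- context [e ?y ?x] => rewrite (symE y x) (negbTE H)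
    end ].

Ltac fin := vm_compute; first [reflexivity | intros; reflexivity | let H := fresh in intro H; discriminate H].

Variables p1 p2 p3 p4 : T.
Hypotheses (e12 : e p1 p2) (e23 : e p2 p3) (e34 : e p3 p4)
  (n13 : ~~ e p1 p3) (n14 : ~~ e p1 p4) (n24 : ~~ e p2 p4).

Definition center v := [&& e v p1, e v p2, e v p3 & e v p4].
Definition anti v := [&& ~~ e v p1, ~~ e v p2, ~~ e v p3 & ~~ e v p4].
Definition Rm v := ~~ center v && ~~ anti v.
Definition good a := anti a && [exists z, center z && ~~ e z a].
Definition Z1 z := center z && [exists a, anti a && e z a].
Definition Bs v := [|| Z1 v, good v | [exists a, good a && e v a]].

Lemma F1 a c r : anti a -> center c -> ~~ e c a -> Rm r -> e r a -> False.
Proof.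
move=> /and4P[a1 a2 a3 a4] /and4P[c1 c2 c3 c4] ca Hr ra.
apply: (@sound p1 [:: p1; p2; p3; p4; c; a; r]); rewrite /adjm /=.
rewrite ?(symE p1 r) ?(symE p2 r) ?(symE p3 r) ?(symE p4 r) ?(symE c r).
norm.
move: Hr; rewrite /Rm /center /anti.
case: (e r p1); case: (e r p2); case: (e r p3); case: (e r p4); case: (e r c); fin.
Qed.

Lemma F2 z a r : center z -> anti a -> e z a -> Rm r -> ~~ e z r -> False.
Proof.
move=> /and4P[c1 c2 c3 c4] /and4P[a1 a2 a3 a4] za Hr zr.
apply: (@sound p1 [:: p1; p2; p3; p4; z; a; r]); rewrite /adjm /=.
rewrite ?(symE p1 r) ?(symE p2 r) ?(symE p3 r) ?(symE p4 r) ?(symE a r).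
norm.
move: Hr; rewrite /Rm /center /anti.
case: (e r p1); case: (e r p2); case: (e r p3); case: (e r p4); case: (e r a); fin.
Qed.

Lemma LB1 c' v y a' : center c' -> anti v -> anti a' -> ~~ e c' a' -> e c' v -> e v a' ->
  e c' y -> ~~ e y a' -> e v y -> ~~ center y -> False.
Proof.
move=> /and4P[c1 c2 c3 c4] /and4P[v1 v2 v3 v4] /and4P[a1 a2 a3 a4] ca cv va cy ya vy Hy.
apply: (@sound p1 [:: p1; p2; p3; p4; c'; v; y; a']); rewrite /adjm /=.
rewrite ?(symE p1 y) ?(symE p2 y) ?(symE p3 y) ?(symE p4 y).
norm.
move: Hy; rewrite /center.
case: (e y p1); case: (e y p2); case: (e y p3); case: (e y p4); fin.
Qed.

Lemma LJ1 z y a v : center z -> anti a -> center v -> Rm y -> e z y -> e z a -> ~~ e y a ->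
  ~~ e v y -> ~~ e v z -> ~~ e v a -> False.
Proof.
move=> /and4P[c1 c2 c3 c4] /and4P[a1 a2 a3 a4] /and4P[v1 v2 v3 v4] Hy zy za ya vy vz va.
apply: (@sound p1 [:: p1; p2; p3; p4; z; y; a; v]); rewrite /adjm /=.
rewrite ?(symE p1 y) ?(symE p2 y) ?(symE p3 y) ?(symE p4 y).
norm.
move: Hy; rewrite /Rm /center /anti.
case: (e y p1); case: (e y p2); case: (e y p3); case: (e y p4); fin.
Qed.

Lemma LJ2 z y a v : center z -> anti a -> center v -> center y -> e z y -> e z a -> ~~ e y a ->
  ~~ e v y -> ~~ e v z -> ~~ e v a -> False.
Proof.
move=> /and4P[c1 c2 c3 c4] /and4P[a1 a2 a3 a4] /and4P[v1 v2 v3 v4] /and4P[y1 y2 y3 y4] zy za ya vy vz va.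
apply: (@sound p1 [:: z; p1; y; a; v]); rewrite /adjm /=.
norm. fin.
Qed.

Lemma LB2 v x c' a' w : e v x -> e v c' -> e x c' -> e a' v -> ~~ e a' x -> ~~ e a' c' ->
  e w c' -> ~~ e w v -> ~~ e w x -> ~~ e w a' -> False.
Proof.
move=> *. apply: (@sound v [:: v; x; c'; a'; w]); rewrite /adjm /=. norm. fin.
Qed.

Lemma cases3 v : [\/ center v, anti v | Rm v].
Proof.
case: (boolP (center v)) => hc; first by constructor 1.
case: (boolP (anti v)) => ha; first by constructor 2.
by constructor 3; rewrite /Rm hc ha.
Qed.

Lemma notB_nbr s a : ~~ Bs s -> good a -> ~~ e s a.
Proof.
rewrite /Bs !negb_or => /and3P[_ _ /existsPn /(_ a)] H ga. by rewrite ga in H.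
Qed.
Lemma notB_Z1 s : ~~ Bs s -> ~~ Z1 s.
Proof. by rewrite /Bs !negb_or => /and3P[]. Qed.
Lemma notB_good s : ~~ Bs s -> ~~ good s.
Proof. by rewrite /Bs !negb_or => /and3P[]. Qed.

Lemma notZ1_anti s a : center s -> ~~ Z1 s -> anti a -> ~~ e s a.
Proof.
move=> cs; rewrite /Z1 cs /= => /existsPn /(_ a) H Ha. by rewrite Ha in H.
Qed.

Lemma bad_Z a z : anti a -> ~~ good a -> center z -> e z a.
Proof.
move=> Ha Hg Hz. move: Hg; rewrite /good Ha /= => /existsPn /(_ z).
by rewrite Hz /= negbK.
Qed.

Lemma Z1_R z r : Z1 z -> Rm r -> e z r.
Proof.
case/andP=> Hz /existsP[a /andP[Ha za]] Hr.
case: (boolP (e z r)) => // nzr; exfalso; exact: (F2 Hz Ha za Hr nzr).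
Qed.

Lemma good_R a r : good a -> Rm r -> ~~ e r a.
Proof.
case/andP=> Ha /existsP[c /andP[Hc ca]] Hr. apply/negP => ra. exact: (F1 Ha Hc ca Hr ra).
Qed.

Definition Inv (S : {set T}) :=
 [/\ p1 \in S, p2 \in S, (forall v, v \in S -> ~~ Bs v),
     (forall z s, Z1 z -> s \in S -> e z s) &
     ((exists x, (x \in S) && center x) ->
        exists x w, [&& x \in S, w \in S, center x, Rm w & ~~ e x w])].

Lemma stepB S v s1 s2 : Inv S -> s1 \in S -> e v s1 -> s2 \in S -> ~~ e v s2 -> ~~ Bs v.
Proof.
case=> _ _ IB IJ I3 Hs1 vs1 Hs2 vs2.
have nZ1 : ~~ Z1 v by apply/negP => /IJ /(_ Hs2) H; rewrite H in vs2.
have ngood : ~~ good v.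
  apply/negP => gv. have := notB_nbr (IB _ Hs1) gv. by rewrite symE vs1.
rewrite /Bs (negbTE nZ1) (negbTE ngood) /=.
apply/negP => /existsP [a' /andP[ga' va']].
case: (cases3 v) => hv.
- move/negP: nZ1; apply; rewrite /Z1 hv /=; apply/existsP; exists a'.
  by rewrite va' andbT; case/andP: ga'.
- case/andP: (ga') => Ha' /existsP[c' /andP[Hc' c'a']].
  have c'v : e c' v := bad_Z hv ngood Hc'.
  have Z1c' : Z1 c' by rewrite /Z1 Hc' /=; apply/existsP; exists v; rewrite hv c'v.
  have Y : forall y, y \in S -> e v y -> center y.
    move=> y Hy vy. case: (boolP (center y)) => // ncy; exfalso.
    have c'y := IJ _ _ Z1c' Hy. have a'y : ~~ e y a' := notB_nbr (IB _ Hy) ga'.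
    exact: (LB1 Hc' hv Ha' c'a' c'v va' c'y a'y vy ncy).
  have [x [w /and5P[Hx Hw cx Rw xw]]] := I3 (ex_intro _ s1 (introT andP (conj Hs1 (Y _ Hs1 vs1)))).
  have vw : ~~ e v w.
    apply/negP => vw. have := Y _ Hw vw. by move: Rw; rewrite /Rm => /andP[/negP].
  have vx : e v x by rewrite symE; exact: bad_Z hv ngood cx.
  have vc' : e v c' by rewrite symE.
  have xc' : e x c' by rewrite symE; exact: IJ.
  have a'v : e a' v by rewrite symE.
  have a'x : ~~ e a' x by rewrite symE; exact: notB_nbr (IB _ Hx) ga'.
  have a'c' : ~~ e a' c' by rewrite symE.
  have wc' : e w c' by rewrite symE; exact: IJ.
  have wv : ~~ e w v by rewrite symE.
  have wx : ~~ e w x by rewrite symE.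
  have wa' : ~~ e w a' := notB_nbr (IB _ Hw) ga'.
  exact: (LB2 vx vc' xc' a'v a'x a'c' wc' wv wx wa').
- by move: (good_R ga' hv); rewrite va'.
Qed.

Lemma stepJ S v s2 z : Inv S -> ~~ Bs v -> s2 \in S -> ~~ e v s2 -> Z1 z -> e z v.
Proof.
case=> _ _ IB IJ _ nBv Hs2 vs2 Hz.
case/andP: (Hz) => cz /existsP[a /andP[Ha za]].
case: (cases3 v) => hv.
- case: (boolP (e z v)) => // zv; exfalso.
  have nZ1v := notB_Z1 nBv.
  have va : ~~ e v a := notZ1_anti hv nZ1v Ha.
  have ga : good a.
    case: (boolP (good a)) => // nga. have := bad_Z Ha nga hv. by rewrite (negbTE va).
  have vz : ~~ e v z by rewrite symE.
  have zy := IJ z s2 Hz Hs2.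
  case: (cases3 s2) => hy.
  + have ya : ~~ e s2 a := notZ1_anti hy (notB_Z1 (IB _ Hs2)) Ha.
    exact: (LJ2 cz Ha hv hy zy za ya vs2 vz va).
  + have := bad_Z hy (notB_good (IB _ Hs2)) hv. by rewrite (negbTE vs2).
  + have ya := good_R ga hy.
    exact: (LJ1 cz Ha hv hy zy za ya vs2 vz va).
- exact: bad_Z hv (notB_good nBv) cz.
- exact: Z1_R Hz hv.
Qed.

Lemma stepI3 S v s2 : Inv S -> ~~ Bs v -> s2 \in S -> ~~ e v s2 ->
  (exists x, (x \in v |: S) && center x) ->
  exists x w, [&& x \in v |: S, w \in v |: S, center x, Rm w & ~~ e x w].
Proof.
case=> _ _ IB IJ I3 nBv Hs2 vs2 [x /andP[Hx cx]].
case: (boolP [exists x, (x \in S) && center x]) => [/existsP [x' Hx']|noS].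
- have [y [w /and5P[Hy Hw cy Rw yw]]] := I3 (ex_intro _ x' Hx').
  by exists y, w; rewrite !in_setU1 Hy Hw cy Rw yw !orbT.
- rewrite in_setU1 in Hx; case/orP: Hx => [/eqP xv|xS]; last first.
    by move/negP: noS; case; apply/existsP; exists x; rewrite xS cx.
  subst x. exists v, s2. rewrite !in_setU1 eqxx Hs2 cx vs2 orbT /=.
  rewrite ?andbT /Rm; apply/andP; split.
  + apply/negP => cs2. move/negP: noS; apply; apply/existsP; exists s2; by rewrite Hs2 cs2.
  + apply/negP => as2. have := bad_Z as2 (notB_good (IB _ Hs2)) cx. by rewrite (negbTE vs2).
Qed.

Lemma step S v s1 s2 : Inv S -> s1 \in S -> e v s1 -> s2 \in S -> ~~ e v s2 -> Inv (v |: S).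
Proof.
move=> HI Hs1 vs1 Hs2 vs2. have nBv := stepB HI Hs1 vs1 Hs2 vs2.
case: (HI) => I1 I2 IB IJ I3. split.
- by rewrite in_setU1 I1 orbT.
- by rewrite in_setU1 I2 orbT.
- move=> u; rewrite in_setU1 => /orP[/eqP->|]; [exact: nBv|exact: IB].
- move=> z u Hz; rewrite in_setU1 => /orP[/eqP->|]; [exact: (stepJ HI nBv Hs2 vs2 Hz) | exact: IJ].
- exact: (stepI3 HI nBv Hs2 vs2).
Qed.

Lemma grow (b : T) : Bs b -> forall n (S : {set T}), Inv S -> #|~: S| <= n ->
  exists X, homogeneous e X.
Proof.
move=> Hb; elim=> [|n IH] S HI Hn;
  case: (pickP (fun v => [&& v \notin S, [exists s in S, e v s] & [exists s in S, ~~ e v s]])) => [v|Hnone].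
- case/and3P=> Hv _ _. have : 0 < #|~: S| by apply/card_gt0P; exists v; rewrite inE.
  by move/ar1/(_ Hn).
- exists S. case: (HI) => I1 I2 IB _ _. split.
  + apply/andP; split.
    * have : #|[set p1; p2]| <= #|S|.
        by apply: subset_leq_card; apply/subsetP => u; rewrite !inE => /orP[]/eqP->.
      rewrite cards2. have -> : p1 != p2 by apply/eqP => E; move: e12; rewrite E irrE.
      by [].
    * have nb : b \notin S by apply/negP => /IB; rewrite Hb.
      have : 0 < #|~: S| by apply/card_gt0P; exists b; rewrite inE.
      exact: ar2 (cardsC S).
  + move=> v Hv. move: (Hnone v); rewrite Hv /=.
    case: (boolP [exists s in S, e v s]) => ex /= H2.
    * left=> x Hx. move/existsPn: H2 => /(_ x). by rewrite Hx /= negbK.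
    * right=> x Hx. move/existsPn: ex => /(_ x). by rewrite Hx.
- case/and3P=> Hv /existsP[s1 /andP[Hs1 vs1]] /existsP[s2 /andP[Hs2 vs2]].
  apply: (IH (v |: S)); first exact: (step HI Hs1 vs1 Hs2 vs2).
  have h1 := cardsC S. have h2 := cardsC (v |: S). rewrite cardsU1 Hv in h2. exact: ar3 h1 h2 Hn.
- exists S. case: (HI) => I1 I2 IB _ _. split.
  + apply/andP; split.
    * have : #|[set p1; p2]| <= #|S|.
        by apply: subset_leq_card; apply/subsetP => u; rewrite !inE => /orP[]/eqP->.
      rewrite cards2. have -> : p1 != p2 by apply/eqP => E; move: e12; rewrite E irrE.
      by [].
    * have nb : b \notin S by apply/negP => /IB; rewrite Hb.
      have : 0 < #|~: S| by apply/card_gt0P; exists b; rewrite inE.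
      exact: ar2 (cardsC S).
  + move=> v Hv. move: (Hnone v); rewrite Hv /=.
    case: (boolP [exists s in S, e v s]) => ex /= H2.
    * left=> x Hx. move/existsPn: H2 => /(_ x). by rewrite Hx /= negbK.
    * right=> x Hx. move/existsPn: ex => /(_ x). by rewrite Hx.
Qed.

Lemma Inv0 : Inv [set p1; p2].
Proof.
have np1 : ~~ Bs p1.
  rewrite /Bs /Z1 /center /good /anti irrE e12 /=.
  apply/existsPn => a; apply/negP => /andP[/andP[/and4P[a1 _ _ _] _] pa].
  by rewrite symE pa in a1.
have np2 : ~~ Bs p2.
  rewrite /Bs /Z1 /center /good /anti irrE (symE p2 p1) e12 /= ?andbF /=.
  apply/existsPn => a; apply/negP => /andP[/andP[/and4P[_ a2 _ _] _] pa].
  by rewrite symE pa in a2.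
split.
- by rewrite !inE eqxx.
- by rewrite !inE eqxx orbT.
- by move=> v; rewrite !inE => /orP[]/eqP->.
- move=> z s /andP[/and4P[z1 z2 _ _] _]; rewrite !inE => /orP[]/eqP->; done.
- case=> x /andP[]; rewrite !inE => /orP[]/eqP-> /and4P[]; rewrite irrE //.
Qed.

Lemma main_hom (b : T) : Bs b -> exists X, homogeneous e X.
Proof. move=> Hb. exact: (grow Hb Inv0 (leqnn _)). Qed.
End G.

Theorem theorem1p4 (T : finType) (e : rel T) :
  simple_graph e ->
  ~ has_induced e C5 ->
  ~ has_induced e bull ->
  contains_anchor e ->
  exists X : {set T}, homogeneous e X.
Proof.
move=> [irr sym] noc5 nobull.
pose o0 := @Ordinal 6 0 isT. pose o1 := @Ordinal 6 1 isT. pose o2 := @Ordinal 6 2 isT.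
pose o3 := @Ordinal 6 3 isT. pose o4 := @Ordinal 6 4 isT. pose o5 := @Ordinal 6 5 isT.
case=> [[f [_ Hf]]|[f [_ Hf]]].
- have e12 : e (f o0) (f o1) by rewrite -Hf.
  have e23 : e (f o1) (f o2) by rewrite -Hf.
  have e34 : e (f o2) (f o3) by rewrite -Hf.
  have n13 : ~~ e (f o0) (f o2) by rewrite -Hf.
  have n14 : ~~ e (f o0) (f o3) by rewrite -Hf.
  have n24 : ~~ e (f o1) (f o3) by rewrite -Hf.
  apply: (main_hom irr sym nobull noc5 e12 e23 e34 n13 n14 n24 (b := f o5)).
  rewrite /Bs; apply/orP; right; apply/orP; left.
  rewrite /good /anti -!Hf /=; apply/existsP; exists (f o4).
  by rewrite /center -!Hf.
- have e12 : e (f o0) (f o1) by rewrite -Hf.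
  have e23 : e (f o1) (f o2) by rewrite -Hf.
  have e34 : e (f o2) (f o3) by rewrite -Hf.
  have n13 : ~~ e (f o0) (f o2) by rewrite -Hf.
  have n14 : ~~ e (f o0) (f o3) by rewrite -Hf.
  have n24 : ~~ e (f o1) (f o3) by rewrite -Hf.
  apply: (main_hom irr sym nobull noc5 e12 e23 e34 n13 n14 n24 (b := f o4)).
  rewrite /Bs; apply/orP; left.
  rewrite /Z1 /center -!Hf /=; apply/existsP; exists (f o5).
  by rewrite /anti -!Hf.
Qed.
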